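(* Let $S$ be a standard quantum entity on a finite-dimensional complex Hilbert space $\mathcal{H}$. For any two experiments $e_E,e_F$, either $e_E=e_F$ or $e_E\perp e_F$.
   Context: A spectral family of $\mathcal{H}$ is a set $E=\{E_1,\dots,E_r\}$ of pairwise orthogonal nonzero orthogonal projections with $\sum_kE_k=I$. The standard quantum entity on $\mathcal{H}$ has states $p_{\bar c}$, one for each ray $\bar c$ (generated by a unit vector $c$), experiments $e_E$, one for each spectral family $E$ (so $e_E=e_F$ iff $E=F$), outcomes $x_{E_k}$, one for each orthogonal projection $E_k$, and outcome sets $O(e_E,p_{\bar c})=\{x_{E_k}:E_k\in E,\ E_kc\neq0\}$. Experiment orthogonality: $e\perp f$ iff there is a state $p$ with $O(e,p)\cap O(f,p)=\emptyset$. *)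

(* Defs.v *)
From HB Require Import structures.
From mathcomp Require Import all_boot all_order all_algebra.
From mathcomp Require Import finmap.
From mathcomp Require Import reals.
From mathcomp.real_closed Require Import complex.
Set Implicit Arguments. Unset Strict Implicit. Unset Printing Implicit Defensive.
Import Order.TTheory GRing.Theory Num.Theory.
Local Open Scope ring_scope.
Local Open Scope fset_scope.

(* The Hilbert space H = C^n (column vectors), C = R[i] the complex numbers. *)

Definition mxadj (C : numClosedFieldType) m n (A : 'M[C]_(m, n)) : 'M[C]_(n, m) :=
  (map_mx Num.conj A)^T.

Definition orth_proj (C : numClosedFieldType) n (P : 'M[C]_n) : Prop :=
  P *m P = P /\ mxadj P = P.

Definition spectral_family (C : numClosedFieldType) n (E : {fset 'M[C]_n}) : Prop :=
  (forall P, P \in E -> orth_proj P /\ P != 0) /\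
  (forall P Q, P \in E -> Q \in E -> P != Q -> P *m Q = 0) /\
  \sum_(P <- E) P = 1%:M.

(* unit vectors (generators of rays; states p_{c̄}) *)
Definition unit_vector (C : numClosedFieldType) n (c : 'cV[C]_n) : Prop :=
  mxadj c *m c = 1%:M.

(* outcome set O(e_E, p_c) : outcomes x_{E_k} identified with projections E_k *)
Definition outcome_set (C : numClosedFieldType) n (E : {fset 'M[C]_n}) (c : 'cV[C]_n)
  : {fset 'M[C]_n} := [fset P in E | P *m c != 0].

Definition exp_orth (C : numClosedFieldType) n (E F : {fset 'M[C]_n}) : Prop :=
  exists c : 'cV[C]_n, unit_vector c /\ outcome_set E c `&` outcome_set F c = fset0.

(* Main.v *)
Require Import Defs.
From HB Require Import structures.
From mathcomp Require Import all_boot all_order all_algebra.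
From mathcomp Require Import finmap.
From mathcomp Require Import reals.
From mathcomp.real_closed Require Import complex.
Import Order.TTheory GRing.Theory Num.Theory.
Local Open Scope ring_scope.
Local Open Scope fset_scope.
Local Open Scope complex_scope.

Lemma normalize (C : numClosedFieldType) n (w : 'cV[C]_n) :
  w != 0 -> exists k : C, unit_vector (k *: w).
Proof.
move=> wn0.
pose a := (mxadj w *m w) 0 0.
have ae : a = \sum_i `|w i 0| ^+ 2.
  rewrite /a !mxE; apply: eq_bigr => i _; rewrite !mxE normCKC //.
have a_ge0 : 0 <= a by rewrite ae sumr_ge0 // => i _; rewrite exprn_ge0.
have an0 : a != 0.
  apply: contra wn0; rewrite ae psumr_eq0; last by move=> i _; rewrite exprn_ge0.
  move/allP => H; apply/eqP/matrixP => i j; rewrite !mxE (ord1 j).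
  have := H i (mem_index_enum _); rewrite /= sqrf_eq0 normr_eq0 => /eqP //.
pose s := sqrtC a.
have s0 : 0 <= s by rewrite sqrtC_ge0.
have sn0 : s != 0 by rewrite sqrtC_eq0.
exists s^-1; rewrite /unit_vector.
have -> : mxadj (s^-1 *: w) = s^-1 *: mxadj w.
  apply/matrixP => i j; rewrite !mxE rmorphM /= geC0_conj // invr_ge0 //.
rewrite -scalemxAl -scalemxAr scalerA (mx11_scalar (mxadj w *m w)) -/a.
rewrite scale_scalar_mx; congr (_ %:M).
rewrite -invrM ?unitfE // -expr2 sqrtCK mulVf //.
Qed.

Lemma proj_sum (C : numClosedFieldType) n (E S : {fset 'M[C]_n}) P :
  spectral_family E -> S `<=` E -> P \in E ->
  P *m \sum_(Q <- S) Q = if P \in S then P else 0.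
Proof.
move=> [hP [hO _]] /fsubsetP SE PE.
rewrite mulmx_sumr; case: ifP => PS.
  rewrite (bigD1_seq P) //= big1_seq ?addr0; first by case: (hP P PE) => [[-> _]].
  move=> Q /andP [QP QS]; apply: hO => //; [exact: SE | by rewrite eq_sym].
rewrite big1_seq // => Q /andP [_ QS]; apply: hO => //; first exact: SE.
by apply: contraFN PS => /eqP ->.
Qed.

Lemma sub_of_sum1 (C : numClosedFieldType) n (E F : {fset 'M[C]_n}) :
  spectral_family E -> \sum_(Q <- E `&` F) Q = 1%:M -> E `<=` F.
Proof.
move=> sE h; apply/fsubsetP => Q QE; apply/negPn/negP => QF.
have := @proj_sum _ _ E _ Q sE (fsubsetIl E F) QE.
rewrite h mulmx1 inE QE (negbTE QF) /= => Q0.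
by case: sE => [hP _]; case: (hP Q QE) => _; rewrite Q0 eqxx.
Qed.

Lemma main_gen (C : numClosedFieldType) (n : nat) (E F : {fset 'M[C]_n}) :
  spectral_family E -> spectral_family F ->
  E = F \/ exp_orth E F.
Proof.
move=> sE sF.
have [h|h] := eqVneq (\sum_(Q <- E `&` F) Q) 1%:M.
  left; apply/eqP; rewrite eqEfsubset (@sub_of_sum1 _ _ E F sE h) /=.
  by rewrite fsetIC in h; rewrite (@sub_of_sum1 _ _ F E sF h).
right.
pose M := 1%:M - \sum_(Q <- E `&` F) Q.
have Mn0 : M != 0 by rewrite /M subr_eq0 eq_sym.
have /existsP [i /existsP [j Mij]] : [exists i, exists j, M i j != 0].
  apply: contraNT Mn0; rewrite negb_exists => /forallP H.
  apply/eqP/matrixP => a b; move: (H a); rewrite negb_exists.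
  by move=> /forallP /(_ b) /negPn /eqP ->; rewrite mxE.
pose w := M *m delta_mx j (0 : 'I_1).
have wn0 : w != 0.
  rewrite /w -colE; apply: contraNneq Mij => w0.
  by have := congr1 (fun A : 'cV[C]_n => A i 0) w0; rewrite !mxE => ->.
have [k uk] := @normalize _ _ w wn0.
exists (k *: w); split => //.
apply/eqP; rewrite -fsubset0; apply/fsubsetP => P.
rewrite !inE => /andP [/andP [PE _] /andP [PF PC]].
have PG : P \in E `&` F by rewrite inE PE PF.
have PM : P *m M = 0.
  rewrite /M mulmxBr mulmx1 (@proj_sum _ _ E _ P sE (fsubsetIl E F) PE) PG subrr //.
by move: PC; rewrite -scalemxAr /w mulmxA PM mul0mx scaler0 eqxx.
Qed.

Theorem mainTheorem19 (R : realType) (n : nat) (E F : {fset 'M[R[i]]_n}) :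
  spectral_family E -> spectral_family F ->
  E = F \/ exp_orth E F.
Proof. exact: main_gen. Qed.
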